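(* Let $s \geq 0$ be real, let $u$ be a zero-mean trigonometric polynomial on $\mathbb{T}^d$ (or more generally a zero-mean function regular enough for all sums below to converge absolutely), and let $v = \overline{u}$. Define \[ Z_6(u) := \langle \Lambda^s (W_5)_1(u,v), \Lambda^s v\rangle + \langle \Lambda^s u, \Lambda^s (W_5)_2(u,v)\rangle . \] Then \[ Z_6(u) = \frac{3i}{32}\sum_{\substack{j,\ell,k\in\mathbb{Z}^d\setminus\{0\}\\ |k| = |j|+|\ell|}} \big(u_ju_{-j}u_\ell u_{-\ell}v_kv_{-k} - v_jv_{-j}v_\ell v_{-\ell}u_ku_{-k}\big)\,|j|\,|\ell|\,|k|\,\big(|k|^{2s} - |j|^{2s} - |\ell|^{2s}\big). \] In particular $Z_6(u) = 0$ for $s = \frac12$, while for $s=1$ the factor $|k|^{2s}-|j|^{2s}-|\ell|^{2s}$ equals $2|j||\ell|$ on the set of summation.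
   Context: $\mathbb{T}^d = (\mathbb{R}/2\pi\mathbb{Z})^d$. Zero-mean functions are written $u = \sum_{j\in\mathbb{Z}^d\setminus\{0\}} u_j e^{ij\cdot x}$; $|\cdot|$ is the Euclidean norm. $\Lambda^s$ is the Fourier multiplier $e^{ij\cdot x}\mapsto |j|^s e^{ij\cdot x}$. The pairing is the (normalized) bilinear form $\langle w,h\rangle := \sum_{j\neq0} w_j h_{-j}$. $\delta_a^b = 1$ if $a=b$ and $0$ otherwise; a quotient of the form $(1-\delta_a^b)/(a-b)$ is defined to be $0$ when $a=b$. All sums run over $j,\ell,k \in \mathbb{Z}^d\setminus\{0\}$ subject to the indicated constraints. For complex-conjugate pairs $(u,v)$, $v=\overline u$ (so $v_j = \overline{u_{-j}}$), \[ (W_5)_1(u,v) = \tfrac{i}{32}\!\!\sum_{|j|=|\ell|}\!\! u_ju_{-j}v_\ell v_{-\ell}u_k e^{ik\cdot x}|j|^2|\ell|^2\Big(\tfrac{1}{|j|+|k|} - \tfrac{1-\delta_{|\ell|}^{|k|}}{|\ell|-|k|}\Big) + \tfrac{3i}{32}\!\!\sum_{|k|=|j|+|\ell|}\!\! u_ju_{-j}u_\ell u_{-\ell}v_k e^{ik\cdot x}|j||\ell||k| \] \[ + \tfrac{i}{16}\!\!\sum_{|j|=|k|}\!\! u_ju_{-j}u_\ell v_{-\ell}v_k e^{ik\cdot x}|j|^2|\ell|\Big(6 + \tfrac{|\ell|}{|\ell|+|j|} + \tfrac{|\ell|(1-\delta_{|\ell|}^{|j|})}{|\ell|-|j|}\Big)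 + \tfrac{3i}{16}\!\!\sum_{|k|=|j|-|\ell|}\!\! u_ju_{-j}v_\ell v_{-\ell}v_k e^{ik\cdot x}|j||\ell||k|, \] and $(W_5)_2(u,v)$ is obtained from $(W_5)_1(u,v)$ by exchanging the roles of $u$ and $v$ everywhere and multiplying by $-1$ (equivalently, $(W_5)_2(u,\overline u) = \overline{(W_5)_1(u,\overline u)}$). *)

(* Defs.v *)
From HB Require Import structures.
From mathcomp Require Import all_boot all_order all_algebra.
From mathcomp Require Import all_classical all_reals all_analysis.
From mathcomp Require Import complex.
Set Implicit Arguments. Unset Strict Implicit. Unset Printing Implicit Defensive.
Import Order.TTheory GRing.Theory Num.Theory.
Local Open Scope ring_scope.

Section Defs.
Variables (R : realType) (d : nat).
Local Notation C := (R[i]).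
Local Notation Zd := ('rV[int]_d).

Definition znorm (j : Zd) : R := Num.sqrt (\sum_(i < d) ((j ord0 i)%:~R) ^+ 2).

Definition RtoC (x : R) : C := (x +i* 0)%C.

(* Fourier coefficients are functions Zd -> C.  T is a finite list of lattice
   points outside of which every summand vanishes; all sums over
   Z^d \ {0} are computed as sums over T \ {0}. *)
Definition sum1 (T : seq Zd) (F : Zd -> C) : C :=
  \sum_(j <- T | j != 0) F j.
Definition sum2 (T : seq Zd) (F : Zd -> Zd -> C) : C :=
  \sum_(j <- T | j != 0) \sum_(l <- T | l != 0) F j l.
Definition sum3 (T : seq Zd) (F : Zd -> Zd -> Zd -> C) : C :=
  \sum_(j <- T | j != 0) \sum_(l <- T | l != 0) \sum_(k <- T | k != 0) F j l k.

Definition kdelta (a b : R) : R := (a == b)%:R.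

Definition W51 (T : seq Zd) (u v : Zd -> C) (k : Zd) : C :=
  if k == 0 then 0 else
  let nk := znorm k in
  'i / 32%:R * sum2 T (fun j l =>
     if znorm j == znorm l then
       u j * u (- j) * v l * v (- l) * u k *
       RtoC (znorm j ^+ 2 * znorm l ^+ 2 *
             (1 / (znorm j + nk) - (1 - kdelta (znorm l) nk) / (znorm l - nk)))
     else 0)
  + 3%:R * 'i / 32%:R * sum2 T (fun j l =>
     if nk == znorm j + znorm l then
       u j * u (- j) * u l * u (- l) * v k * RtoC (znorm j * znorm l * nk)
     else 0)
  + 'i / 16%:R * sum2 T (fun j l =>
     if znorm j == nk then
       u j * u (- j) * u l * v (- l) * v k *
       RtoC (znorm j ^+ 2 * znorm l *
             (6%:R + znorm l / (znorm l + znorm j)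
              + znorm l * (1 - kdelta (znorm l) (znorm j)) / (znorm l - znorm j)))
     else 0)
  + 3%:R * 'i / 16%:R * sum2 T (fun j l =>
     if nk == znorm j - znorm l then
       u j * u (- j) * v l * v (- l) * v k * RtoC (znorm j * znorm l * nk)
     else 0).

Definition W52 (T : seq Zd) (u v : Zd -> C) (k : Zd) : C := - W51 T v u k.

Definition Lambda (s : R) (w : Zd -> C) (j : Zd) : C := RtoC (znorm j `^ s) * w j.

Definition pairing (T : seq Zd) (w h : Zd -> C) : C := sum1 T (fun j => w j * h (- j)).

(* v = conj u, i.e. v_j = conj (u_{-j}) *)
Definition conjF (u : Zd -> C) (j : Zd) : C := conjc (u (- j)).

Definition Z6 (T : seq Zd) (s : R) (u : Zd -> C) : C :=
  let v := conjF u in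
  pairing T (Lambda s (W51 T u v)) (Lambda s v) + pairing T (Lambda s u) (Lambda s (W52 T u v)).

Definition Z6rhs (T : seq Zd) (s : R) (u : Zd -> C) : C :=
  let v := conjF u in
  3%:R * 'i / 32%:R * sum3 T (fun j l k =>
    if znorm k == znorm j + znorm l then
      (u j * u (- j) * u l * u (- l) * v k * v (- k)
       - v j * v (- j) * v l * v (- l) * u k * u (- k))
      * RtoC (znorm j * znorm l * znorm k
              * (znorm k `^ (2 * s) - znorm j `^ (2 * s) - znorm l `^ (2 * s)))
    else 0).

End Defs.

(* Main.v *)
Require Import Defs.
From HB Require Import structures.
From mathcomp Require Import all_boot all_order all_algebra.
From mathcomp Require Import all_classical all_reals all_analysis.
From mathcomp Require Import complex.
From mathcomp Require Import ring lra.
Set Implicit Arguments. Unset Strict Implicit. Unset Printing Implicit Defensive.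
Import Order.TTheory GRing.Theory Num.Theory.
Local Open Scope ring_scope.

Lemma RtoCM (R : realType) (a b : R) : RtoC (a * b) = RtoC a * RtoC b.
Proof. by rewrite /RtoC !complexr0 rmorphM. Qed.
Lemma RtoCD (R : realType) (a b : R) : RtoC (a + b) = RtoC a + RtoC b.
Proof. by rewrite /RtoC !complexr0 rmorphD. Qed.
Lemma RtoCB (R : realType) (a b : R) : RtoC (a - b) = RtoC a - RtoC b.
Proof. by rewrite /RtoC !complexr0 rmorphB. Qed.
Lemma znormN (R : realType) d (k : 'rV[int]_d) : znorm R (- k) = znorm R k.
Proof. rewrite /znorm; congr Num.sqrt; apply: eq_bigr => i _. by rewrite mxE intrN sqrrN. Qed.

Definition cA (R : realType) (a b c : R) : R :=
  a ^+ 2 * b ^+ 2 * (1 / (a + c) - (1 - kdelta b c) / (b - c)).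
Definition cC (R : realType) (a b : R) : R :=
  a ^+ 2 * b * (6%:R + b / (b + a) + b * (1 - kdelta b a) / (b - a)).

Definition fA (R : realType) d (u v : 'rV[int]_d -> R[i]) (j l k : 'rV[int]_d) : R[i] :=
  if znorm R j == znorm R l then u j * u (- j) * v l * v (- l) * u k * RtoC (cA (znorm R j) (znorm R l) (znorm R k)) else 0.
Definition fB (R : realType) d (u v : 'rV[int]_d -> R[i]) (j l k : 'rV[int]_d) : R[i] :=
  if znorm R k == znorm R j + znorm R l then u j * u (- j) * u l * u (- l) * v k * RtoC (znorm R j * znorm R l * znorm R k) else 0.
Definition fC (R : realType) d (u v : 'rV[int]_d -> R[i]) (j l k : 'rV[int]_d) : R[i] :=
  if znorm R j == znorm R k then u j * u (- j) * u l * v (- l) * v k * RtoC (cC (znorm R j) (znorm R l)) else 0.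
Definition fD (R : realType) d (u v : 'rV[int]_d -> R[i]) (j l k : 'rV[int]_d) : R[i] :=
  if znorm R k == znorm R j - znorm R l then u j * u (- j) * v l * v (- l) * v k * RtoC (znorm R j * znorm R l * znorm R k) else 0.

Lemma W51E (R : realType) d (T : seq 'rV[int]_d) (u v : 'rV[int]_d -> R[i]) k :
  k != 0 -> W51 T u v k =
  'i / 32%:R * sum2 T (fun j l => fA u v j l k)
  + 3%:R * 'i / 32%:R * sum2 T (fun j l => fB u v j l k)
  + 'i / 16%:R * sum2 T (fun j l => fC u v j l k)
  + 3%:R * 'i / 16%:R * sum2 T (fun j l => fD u v j l k).
Proof. by move=> hk; rewrite /W51 (negbTE hk). Qed.
Definition piece (R : realType) d (f : ('rV[int]_d -> R[i]) -> ('rV[int]_d -> R[i]) -> 'rV[int]_d -> 'rV[int]_d -> 'rV[int]_d -> R[i])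
  (T : seq 'rV[int]_d) (p : R -> R[i]) (u v : 'rV[int]_d -> R[i]) : R[i] :=
  \sum_(k <- T | k != 0) p (znorm R k) *
     (sum2 T (fun j l => f u v j l k) * v (- k) - u k * sum2 T (fun j l => f v u j l (- k))).

Lemma Z6E (R : realType) d (T : seq 'rV[int]_d) s u :
  Z6 T s u = \sum_(k <- T | k != 0) (RtoC (znorm R k `^ s) * RtoC (znorm R k `^ s)) *
    (W51 T u (conjF u) k * conjF u (- k) - u k * W51 T (conjF u) u (- k)).
Proof.
rewrite /Z6 /pairing /sum1 -big_split /=; apply: eq_bigr => k _.
rewrite /W52 /Lambda znormN; ring.
Qed.

Lemma Zsplit (R : realType) d (T : seq 'rV[int]_d) (p : R -> R[i]) u v :
  \sum_(k <- T | k != 0) p (znorm R k) * (W51 T u v k * v (- k) - u k * W51 T v u (- k)) =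
  'i / 32%:R * piece (@fA R d) T p u v + 3%:R * 'i / 32%:R * piece (@fB R d) T p u v
  + 'i / 16%:R * piece (@fC R d) T p u v + 3%:R * 'i / 16%:R * piece (@fD R d) T p u v.
Proof.
rewrite /piece !mulr_sumr -!big_split /=; apply: eq_bigr => k hk.
rewrite !W51E ?oppr_eq0 //; ring.
Qed.
Lemma pieceA (R : realType) d (T : seq 'rV[int]_d) p u v : piece (@fA R d) T p u v = 0.
Proof.
rewrite /piece big1 // => k hk.
suff -> : sum2 T (fun j l => fA u v j l k) * v (-k) = u k * sum2 T (fun j l => fA v u j l (-k)).
  by rewrite subrr mulr0.
rewrite /sum2 [in RHS]exchange_big /= mulr_suml mulr_sumr; apply: eq_bigr => j _.
rewrite mulr_suml mulr_sumr; apply: eq_bigr => l _.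
rewrite /fA !znormN [znorm R l == _]eq_sym; case: eqP => [e|_]; last by rewrite mul0r mulr0.
rewrite e; ring.
Qed.
Lemma sum2Mr (R : realType) d (T : seq 'rV[int]_d) (F : _ -> _ -> R[i]) c :
  sum2 T F * c = sum2 T (fun j l => F j l * c).
Proof. rewrite /sum2 mulr_suml; apply: eq_bigr => j _; by rewrite mulr_suml. Qed.
Lemma sum2Ml (R : realType) d (T : seq 'rV[int]_d) (F : _ -> _ -> R[i]) c :
  c * sum2 T F = sum2 T (fun j l => c * F j l).
Proof. rewrite /sum2 mulr_sumr; apply: eq_bigr => j _; by rewrite mulr_sumr. Qed.

Lemma piece_split (R : realType) d f (T : seq 'rV[int]_d) p u v :
  piece f T p u v =
  \sum_(k <- T | k != 0) sum2 T (fun j l => p (znorm R k) * (f u v j l k * v (-k)))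
  - \sum_(k <- T | k != 0) sum2 T (fun j l => p (znorm R k) * (u k * f v u j l (-k))).
Proof.
rewrite /piece -sumrB; apply: eq_bigr => k _.
by rewrite mulrBr sum2Mr sum2Ml !sum2Ml.
Qed.

Lemma pieceC (R : realType) d (T : seq 'rV[int]_d) p u v
  (hN : forall F : 'rV[int]_d -> R[i],
     \sum_(l <- T | l != 0) F (- l) = \sum_(l <- T | l != 0) F l) :
  piece (@fC R d) T p u v = 0.
Proof.
rewrite piece_split; apply/eqP; rewrite subr_eq0; apply/eqP.
rewrite /sum2 [in RHS]exchange_big /=; apply: eq_bigr => k _; apply: eq_bigr => j _.
rewrite -hN; apply: eq_bigr => l _.
rewrite /fC !znormN opprK [znorm R k == _]eq_sym; case: eqP => [e|_]; last by rewrite !(mul0r, mulr0).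
rewrite e; ring.
Qed.
Definition UU (R : realType) d (u v : 'rV[int]_d -> R[i]) j l k :=
  u j * u (-j) * u l * u (-l) * v k * v (-k).

Lemma sum2B (R : realType) d (T : seq 'rV[int]_d) (F G : _ -> _ -> R[i]) :
  sum2 T F - sum2 T G = sum2 T (fun j l => F j l - G j l).
Proof. rewrite /sum2 -sumrB; apply: eq_bigr => j _; by rewrite -sumrB. Qed.

Lemma piece_split2 (R : realType) d f (T : seq 'rV[int]_d) p u v :
  piece f T p u v =
  \sum_(k <- T | k != 0) \sum_(j <- T | j != 0) \sum_(l <- T | l != 0)
     (p (znorm R k) * (f u v j l k * v (-k)) - p (znorm R k) * (u k * f v u j l (-k))).
Proof. by rewrite piece_split -sumrB; apply: eq_bigr => k _; rewrite sum2B. Qed.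

Lemma sum3_kjl (R : realType) d (T : seq 'rV[int]_d) (F : _ -> _ -> _ -> R[i]) :
  sum3 T F = \sum_(k <- T | k != 0) \sum_(j <- T | j != 0) \sum_(l <- T | l != 0) F j l k.
Proof.
rewrite /sum3 (eq_bigr (fun j => \sum_(k <- T | k != 0) \sum_(l <- T | l != 0) F j l k)).
  by rewrite exchange_big.
by move=> j _; rewrite exchange_big.
Qed.

Lemma pieceB (R : realType) d (T : seq 'rV[int]_d) p u v :
  piece (@fB R d) T p u v = sum3 T (fun j l k => if znorm R k == znorm R j + znorm R l then
     (UU u v j l k - UU v u j l k) * RtoC (znorm R j * znorm R l * znorm R k) * p (znorm R k) else 0).
Proof.
rewrite piece_split2 sum3_kjl; apply: eq_bigr => k _; apply: eq_bigr => j _; apply: eq_bigr => l _.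
rewrite /fB /UU !znormN; case: ifP => _; last by rewrite !(mul0r, mulr0) subrr.
ring.
Qed.

Lemma pieceD (R : realType) d (T : seq 'rV[int]_d) p u v :
  piece (@fD R d) T p u v = sum3 T (fun j l k => if znorm R k == znorm R j + znorm R l then
     (UU v u j l k - UU u v j l k) * RtoC (znorm R j * znorm R l * znorm R k) * p (znorm R j) else 0).
Proof.
rewrite piece_split2 /sum3; apply: eq_bigr => a _; rewrite [RHS]exchange_big /=.
apply: eq_bigr => c _; apply: eq_bigr => b _.
rewrite /fD /UU !znormN.
have -> : (znorm R a == znorm R c - znorm R b) = (znorm R c == znorm R a + znorm R b).
  by rewrite eq_sym subr_eq.
case: ifP => _; last by rewrite !(mul0r, mulr0) subrr.
rewrite !RtoCM; ring.
Qed.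
Lemma znorm_ge0 (R : realType) d (k : 'rV[int]_d) : 0 <= znorm R k.
Proof. by rewrite /znorm sqrtr_ge0. Qed.

Lemma sumN (R : realType) d (S : seq 'rV[int]_d) (F : 'rV[int]_d -> R[i]) :
  let T := undup (S ++ map -%R S) in
  \sum_(l <- T | l != 0) F (- l) = \sum_(l <- T | l != 0) F l.
Proof.
move=> T.
have hp : perm_eq (map -%R T) T.
  apply: uniq_perm; first by rewrite (map_inj_uniq oppr_inj) undup_uniq.
    exact: undup_uniq.
  move=> x; rewrite -[x in LHS]opprK (mem_map oppr_inj) !mem_undup !mem_cat orbC.
  have -> : (- x \in S) = (x \in map -%R S) by rewrite -[x in RHS]opprK (mem_map oppr_inj).
  by rewrite (mem_map oppr_inj).
rewrite -(perm_big _ hp) big_map; under eq_bigr do rewrite opprK; apply: eq_bigl => l /=.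
by rewrite oppr_eq0.
Qed.

Lemma sum3D (R : realType) d (T : seq 'rV[int]_d) (F G : _ -> _ -> _ -> R[i]) :
  sum3 T F + sum3 T G = sum3 T (fun j l k => F j l k + G j l k).
Proof.
rewrite /sum3 -big_split; apply: eq_bigr => j _; rewrite -big_split; apply: eq_bigr => l _.
by rewrite -big_split.
Qed.

Lemma sum3sw (R : realType) d (T : seq 'rV[int]_d) (F : _ -> _ -> _ -> R[i]) :
  sum3 T (fun j l k => F l j k) = sum3 T F.
Proof. by rewrite /sum3 exchange_big. Qed.

Lemma powR2 (R : realType) (x s : R) : RtoC (x `^ (2 * s)) = RtoC (x `^ s) * RtoC (x `^ s).
Proof. by rewrite mulrC powRrM powR_mulrn ?powR_ge0 // expr2 RtoCM. Qed.

Lemma ptw (R : realType) (a b c Ka Kb Kc : R) (pa pb pc U1 V1 U2 V2 U3 V3 : R[i]) :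
  RtoC Ka = pa -> RtoC Kb = pb -> RtoC Kc = pc ->
  U1 = U2 -> V1 = V2 -> U3 = U2 -> V3 = V2 ->
  (U1 - V1) * RtoC (a * b * c * (Kc - Ka - Kb)) =
  (U2 - V2) * RtoC (a * b * c) * pc
  + (V2 - U2) * RtoC (a * b * c) * pa
  + (V3 - U3) * RtoC (b * a * c) * pb.
Proof.
move=> <- <- <- -> -> -> ->; rewrite !RtoCM !RtoCB; ring.
Qed.

Lemma claim1 (R : realType) d (S : seq 'rV[int]_d) (u : 'rV[int]_d -> R[i]) s :
  let T := undup (S ++ map -%R S) in Z6 T s u = Z6rhs T s u.
Proof.
move=> T.
rewrite Z6E (Zsplit _ (fun x => RtoC (x `^ s) * RtoC (x `^ s))) pieceA pieceC; last exact: sumN.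
rewrite pieceB pieceD /Z6rhs.
set GB := sum3 T _. set GD := sum3 T _.
rewrite (_ : sum3 T _ = GB + GD + GD).
  by field.
rewrite {2}/GD -[X in _ + X]sum3sw /GB /GD !sum3D /sum3.
apply: eq_bigr => j _; apply: eq_bigr => l _; apply: eq_bigr => k _.
rewrite [znorm R l + _]addrC.
case: ifP => _; last by rewrite !addr0.
by apply: ptw; try exact: powR2; rewrite /UU; ring.
Qed.

Lemma RtoC0 (R : realType) : RtoC (0 : R) = 0.
Proof. by rewrite /RtoC complexr0 rmorph0. Qed.

Unset Implicit Arguments.

Theorem mainTheorem6 (R : realType) (d : nat) (S : seq 'rV[int]_d)
  (u : 'rV[int]_d -> R[i])
  (hsupp : forall j, j \notin S -> u j = 0)  (* u is a trigonometric polynomial *)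
  (hmean : u 0 = 0) :                        (* u has zero mean *)
  let T := undup (S ++ map -%R S) in
  (forall s : R, 0 <= s -> Z6 T s u = Z6rhs T s u)
  /\ Z6 T (2^-1) u = 0
  /\ (forall j l k : 'rV[int]_d, j != 0 -> l != 0 -> k != 0 ->
        znorm R k = znorm R j + znorm R l ->
        znorm R k `^ (2 * 1) - znorm R j `^ (2 * 1) - znorm R l `^ (2 * 1)
        = 2 * znorm R j * znorm R l).
Proof.
move=> T.
have h1 : forall s : R, Z6 T s u = Z6rhs T s u by move=> s; exact: claim1.
split; first by move=> s _; exact: h1.
split.
  rewrite h1 /Z6rhs /sum3 big1 ?mulr0 // => j _; rewrite big1 // => l _; rewrite big1 // => k _.
  case: eqP => // e.
  rewrite mulfV ?pnatr_eq0 // !powRr1 ?znorm_ge0 // e.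
  rewrite (_ : znorm R j + znorm R l - znorm R j - znorm R l = 0) ?mulr0 ?RtoC0 ?mulr0 //.
  ring.
move=> j l k _ _ _ e.
rewrite mulr1 !powR_mulrn ?znorm_ge0 // e; ring.
Qed.
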